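(* Let $G$ be a finite group. The graph $\mathcal{P}^*(G)/\mathtt{N}$ is a tame and pseudo-covering quotient of $\mathcal{P}^*(G)$. In particular $\mathcal{P}^*(G)$ and $\mathcal{P}^*(G)/\mathtt{N}$ have the same number of connected components.
   Context: The power graph $\mathcal{P}(G)$ has vertex set $G$, distinct $x,y$ adjacent iff one is a positive integer power of the other; $\mathcal{P}^*(G)$ is its subgraph induced on $G\setminus\{1\}$; graphs carry a loop at each vertex. $x\mathtt{N}y$ iff $x,y$ have the same closed neighbourhood in $\mathcal{P}(G)$. For a graph $\Gamma$ and equivalence $\sim$ on its vertices, $\Gamma/\sim$ has vertex set the classes, classes joined iff some representatives are joined. The quotient is tame (resp. pseudo-covering) if the projection $x\mapsto[x]$ is: tame means $[x]=[y]$ implies $x,y$ are joined by a path in $\Gamma$; pseudo-covering means surjective and locally strong, i.e. whenever $\{[x_1],[x_2]\}$ is an edge, every $\tilde x_1\in[x_1]$ is adjacent (or equal) to some $\tilde x_2\in[x_2]$. *)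

(* Defs.v *)
From mathcomp Require Import all_boot all_fingroup.
From mathcomp Require Import boolp.
From Stdlib Require Import Relations.

Set Implicit Arguments.
Unset Strict Implicit.
Unset Printing Implicit Defensive.

Local Open Scope group_scope.

Section Graphs.
Variable T : finType.
(* A graph is given by a vertex predicate V and an adjacency relation E
   (restricted to V); every vertex carries a loop. *)
Variables (V : T -> Prop) (E : T -> T -> Prop).

Definition gedge (a b : T) : Prop := V a /\ V b /\ E a b.

Definition joined (x y : T) : Prop := clos_refl_trans T gedge x y.

Definition component (x : T) : {set T} := [set y | `[< joined x y >] ].

Definition ncomp : nat :=
  #| [set component x | x in [set x | `[< V x >] ]] |.

Variable eqv : T -> T -> Prop.

Definition qcls (x : T) : {set T} := [set y | `[< V y /\ eqv x y >] ].

Definition qV (C : {set T}) : Prop := exists x, V x /\ C = qcls x.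

Definition qE (C D : {set T}) : Prop :=
  exists x y, x \in C /\ y \in D /\ (x = y \/ E x y).

Definition tame : Prop :=
  forall x y, V x -> V y -> qcls x = qcls y -> joined x y.

Definition pseudo_covering : Prop :=
  (forall C, qV C -> exists x, V x /\ qcls x = C) /\
  (forall x1 x2, V x1 -> V x2 -> qE (qcls x1) (qcls x2) ->
     forall y1, y1 \in qcls x1 ->
       exists y2, y2 \in qcls x2 /\ (y1 = y2 \/ E y1 y2)).

End Graphs.

Section PowerGraph.
Variable gT : finGroupType.

Definition is_pow (x y : gT) : Prop := exists n : nat, (0 < n)%N /\ y = x ^+ n.

Definition padj (x y : gT) : Prop := x <> y /\ (is_pow x y \/ is_pow y x).

Definition cnbhd (x z : gT) : Prop := z = x \/ padj x z.

Definition relN (x y : gT) : Prop := forall z, cnbhd x z <-> cnbhd y z.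

Definition Vstar (x : gT) : Prop := x <> 1.

End PowerGraph.

(* Main.v *)
Require Import Defs.
From mathcomp Require Import all_boot all_fingroup.
From mathcomp Require Import boolp.
From Stdlib Require Import Relations.

Local Open Scope group_scope.
Set Implicit Arguments.

Lemma card_imset_kernel (aT rT1 rT2 : finType) (A : {set aT})
  (f : aT -> rT1) (g : aT -> rT2) :
  {in A &, forall x y, (f x == f y) = (g x == g y)} -> (#|f @: A| <= #|g @: A|)%N.
Proof.
move=> H.
case: (set_0Vmem A) => [->|[x0 Ax0]]; first by rewrite !imset0 cards0.
pose k z := f (odflt x0 [pick x in A | g x == z]).
have -> : f @: A = k @: (g @: A).
  rewrite -imset_comp; apply: eq_in_imset => x Ax /=.
  rewrite /k; case: pickP => [y|h]; last by have := h x; rewrite Ax eqxx.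
  by case/andP => Ay /eqP gy; apply/eqP; rewrite H // gy.
exact: leq_imset_card.
Qed.

Lemma card_imset_kernel_eq (aT rT1 rT2 : finType) (A : {set aT})
  (f : aT -> rT1) (g : aT -> rT2) :
  {in A &, forall x y, (f x == f y) = (g x == g y)} -> #|f @: A| = #|g @: A|.
Proof.
move=> H; apply/anti_leq/andP; split; apply: card_imset_kernel => x y Ax Ay.
  by rewrite H.
by rewrite H.
Qed.

Section Aux.
Variable T : finType.
Variables (V : T -> Prop) (E : T -> T -> Prop).
Hypothesis Esym : forall a b, E a b -> E b a.

Lemma joined_trans {x y z} : joined V E x y -> joined V E y z -> joined V E x z.
Proof. exact: rt_trans. Qed.

Lemma joined_refl x : joined V E x x.
Proof. exact: rt_refl. Qed.

Lemma joined_sym {x y} : joined V E x y -> joined V E y x.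
Proof.
elim=> [a b [Va [Vb Eab]]|a|a b c _ IH1 _ IH2].
- by apply: rt_step; split; [|split]; auto.
- exact: rt_refl.
- exact: joined_trans IH2 IH1.
Qed.

Lemma component_eq x y : component V E x = component V E y <-> joined V E x y.
Proof.
split.
  move=> h; have : y \in component V E y by rewrite inE; apply/asboolP; apply: rt_refl.
  by rewrite -h inE => /asboolP.
move=> jxy; apply/setP => z; rewrite !inE; apply/asboolP/asboolP => h.
  exact: joined_trans (joined_sym jxy) h.
exact: joined_trans jxy h.
Qed.
End Aux.

Section Main.
Variable gT : finGroupType.

Lemma relN_refl (x : gT) : relN x x.
Proof. by []. Qed.
Lemma relN_sym (x y : gT) : relN x y -> relN y x.
Proof. by move=> h z; split => /h. Qed.
Lemma relN_trans (x y z : gT) : relN x y -> relN y z -> relN x z.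
Proof. by move=> h1 h2 w; split => [/h1/h2|/h2/h1]. Qed.

Lemma padj_sym (x y : gT) : padj x y -> padj y x.
Proof. by case=> ne [h|h]; split; auto. Qed.
Arguments padj_sym : clear implicits.

Lemma in_qcls (x y : gT) : y \in qcls (@Vstar gT) (@relN gT) x <-> Vstar y /\ relN x y.
Proof. by rewrite inE; split => /asboolP. Qed.

Lemma relN_joined (x y : gT) : Vstar x -> Vstar y -> relN x y ->
  joined (@Vstar gT) (@padj gT) x y.
Proof.
move=> Vx Vy h.
have : cnbhd y y by left.
move/h => [->|pa]; first exact: rt_refl.
by apply: rt_step; split; [|split].
Qed.

Lemma qE_joined (x y : gT) : Vstar x -> Vstar y ->
  qE (@padj gT) (qcls (@Vstar gT) (@relN gT) x) (qcls (@Vstar gT) (@relN gT) y) ->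
  joined (@Vstar gT) (@padj gT) x y.
Proof.
move=> Vx Vy [a [b [/in_qcls [Va Na] [/in_qcls [Vb Nb] ab]]]].
apply: joined_trans (relN_joined Vx Va Na) _.
apply: joined_trans _ (joined_sym padj_sym (relN_joined Vy Vb Nb)).
case: ab => [->|pab]; first exact: rt_refl.
by apply: rt_step; split; [|split].
Qed.

Lemma joinedQ (x y : gT) : Vstar x -> Vstar y ->
  joined (@Vstar gT) (@padj gT) x y <->
  joined (qV (@Vstar gT) (@relN gT)) (qE (@padj gT))
    (qcls (@Vstar gT) (@relN gT) x) (qcls (@Vstar gT) (@relN gT) y).
Proof.
move=> Vx Vy; split.
  elim=> [a b [Va [Vb Eab]]|a|a b c _ IH1 _ IH2].
  - apply: rt_step; split; [exists a; split=> //|split; [exists b; split=> //|]].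
    exists a, b; split; first by apply/in_qcls.
    by split; [apply/in_qcls|right].
  - exact: rt_refl.
  - exact: joined_trans IH1 IH2.
move=> h; move: (clos_rt_rt1n _ _ _ _ h) => {h}.
move Ex: (qcls _ _ x) => C; move Ey: (qcls _ _ y) => D h.
elim: h x Ex Vx Ey => [C0|C0 C1 D0 [_ [[z [Vz ->]] qe]] _ IH] x Ex Vx Ey.
  have : x \in qcls (@Vstar gT) (@relN gT) y by rewrite Ey -Ex; apply/in_qcls.
  by move/in_qcls => [_ /relN_sym]; apply: relN_joined.
apply: joined_trans (IH z erefl Vz Ey).
by apply: qE_joined => //; rewrite Ex.
Qed.

End Main.

Unset Implicit Arguments.
(* P*(G) is the graph (Vstar, padj); P*(G)/N is its quotient by relN. *)
Theorem mainTheorem18 (gT : finGroupType) :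
  tame (@Vstar gT) (@padj gT) (@relN gT) /\
  pseudo_covering (@Vstar gT) (@padj gT) (@relN gT) /\
  ncomp (@Vstar gT) (@padj gT) =
  ncomp (qV (@Vstar gT) (@relN gT)) (qE (@padj gT)).
Proof.
split.
  move=> x y Vx Vy h.
  have : y \in qcls (@Vstar gT) (@relN gT) x by rewrite h; apply/in_qcls.
  by move/in_qcls => [_]; apply: relN_joined.
split.
  split; first by move=> C [x [Vx ->]]; exists x.
  move=> x1 x2 V1 V2 [a [b [/in_qcls [Va Na] [Hb ab]]]] y1 /in_qcls [Vy1 Ny1].
  exists b; split=> //.
  have Nay : relN a y1 by apply: relN_trans (relN_sym Na) Ny1.
  have : cnbhd a b by case: ab => [->|]; [left|right].
  move/Nay => [->|p]; [by left|by right].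
rewrite /ncomp.
have -> : [set C | `[< qV (@Vstar gT) (@relN gT) C >]] =
          qcls (@Vstar gT) (@relN gT) @: [set x | `[< Vstar x >]].
  apply/setP => C; rewrite inE; apply/asboolP/imsetP.
    by move=> [x [Vx ->]]; exists x => //; rewrite inE; apply/asboolP.
  by move=> [x]; rewrite inE => /asboolP Vx ->; exists x.
rewrite -imset_comp; apply: card_imset_kernel_eq => x y.
rewrite !inE => /asboolP Vx /asboolP Vy /=.
have Qsym : forall C D : {set gT}, qE (@padj gT) C D -> qE (@padj gT) D C.
  by move=> C D [a [b [Ca [Db ab]]]]; exists b, a; split=> //; split=> //;
     case: ab => [->|/padj_sym]; [left|right].
apply/eqP/eqP.
  move/(@component_eq _ _ _ (@padj_sym gT) _ _) => /(joinedQ Vx Vy) h.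
  by apply/(@component_eq _ _ _ Qsym _ _).
move/(@component_eq _ _ _ Qsym _ _) => h; apply/(@component_eq _ _ _ (@padj_sym gT) _ _).
by apply/(joinedQ Vx Vy).
Qed.
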